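(* Let $\mathcal{L}$ be a closed chain of $n \ge 7$ revolute joints with screw axes $\bm{\xi}_1,\dots,\bm{\xi}_n$ (in the cyclic order of the chain). Suppose there is a line $\ell$ such that every axis $\bm{\xi}_i$ intersects $\ell$, at points $p_1,\dots,p_n$ respectively, and these points occur along $\ell$ in monotone order, i.e. $p_1, p_2, \dots, p_n$ appear consecutively in this order along $\ell$ (in one of its two directions). Then $\mathcal{L}$ is hypo-paradoxical.
   Context: For a revolute joint with unit axis direction $\bm{\omega}_i$ through point $\bm{q}_i$, the screw is $\bm{\xi}_i = (\bm{\omega}_i, \bm{q}_i\times\bm{\omega}_i)$ with twist matrix $\hat{\bm{\xi}}_i = \begin{bmatrix} [\bm{\omega}_i]_\times & \bm{q}_i \times \bm{\omega}_i \\ 0 & 0\end{bmatrix}$. The configuration space of the closed chain is $\mathcal{C}(\mathcal{L}) = \{(\theta_1,\dots,\theta_n) : \prod_{i=1}^n e^{\hat{\bm{\xi}}_i\theta_i} = I_4\}$ near $\theta=0$ (it depends only on the screw axes). The Chebyshev–Grübler–Kutzbach mobility of a closed chain with $n$ links and $n$ revolute joints is $M = n-6$. A closed chain is hypo-paradoxical if $M > 0$ but $\dim\mathcal{C}(\mathcal{L}) = 0$, i.e. it admits no nontrivial continuous motion. *)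

(* Defs.v *)
From HB Require Import structures.
From mathcomp Require Import all_boot all_order all_algebra.
From mathcomp Require Import all_classical all_reals all_analysis.
Set Implicit Arguments. Unset Strict Implicit. Unset Printing Implicit Defensive.
Import Order.TTheory GRing.Theory Num.Theory.
Import numFieldNormedType.Exports.
Local Open Scope ring_scope.

Section Screws.
Variable R : realType.

Definition vcoord (w : 'rV[R]_3) (k : nat) : R := w ord0 (inord k).

(* The skew-symmetric matrix [w]_x, so that [w]_x *m v^T = (w x v)^T. *)
Definition skew (w : 'rV[R]_3) : 'M[R]_3 :=
  \matrix_(i < 3, j < 3)
    match val i, val j with
    | 0, 1 => - vcoord w 2 | 0, 2 => vcoord w 1
    | 1, 0 => vcoord w 2   | 1, 2 => - vcoord w 0
    | 2, 0 => - vcoord w 1 | 2, 1 => vcoord w 0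
    | _, _ => 0
    end.

Definition cross (u v : 'rV[R]_3) : 'rV[R]_3 := (skew u *m v^T)^T.

Definition dot (u v : 'rV[R]_3) : R := \sum_(k < 3) u ord0 k * v ord0 k.

(* Twist matrix of the screw xi = (w, q x w) of a revolute joint with unit
   axis direction w through the point q:
     [ [w]_x   q x w ]
     [   0       0   ]   (4 x 4). *)
Definition twist (w q : 'rV[R]_3) : 'M[R]_4 :=
  let v := cross q w in
  \matrix_(i < 4, j < 4)
    if (i < 3)%N && (j < 3)%N then skew w (inord i) (inord j)
    else if (i < 3)%N && (j == 3 :> nat) then v ord0 (inord i)
    else 0.

Definition expm (A : 'M[R]_4) : 'M[R]_4 :=
  limn (fun N : nat => \sum_(k < N) (k`!%:R)^-1 *: A ^+ k).

Definition loop_closes (n : nat) (w q : 'I_n -> 'rV[R]_3) (theta : 'I_n -> R) : Prop :=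
  \prod_(i < n) expm (theta i *: twist (w i) (q i)) = 1.

Definition config_space (n : nat) (w q : 'I_n -> 'rV[R]_3) : set ('I_n -> R) :=
  [set theta | loop_closes w q theta].

(* dim C(L) = 0 near theta = 0: theta = 0 is an isolated point of C(L). *)
Definition config_dim0_at_0 (n : nat) (w q : 'I_n -> 'rV[R]_3) : Prop :=
  exists2 e : R, 0 < e &
    forall theta : 'I_n -> R, config_space w q theta ->
      (forall i, `|theta i| < e) -> forall i, theta i = 0.

Definition cgk_mobility (n : nat) : int := n%:Z - 6.

Definition hypo_paradoxical (n : nat) (w q : 'I_n -> 'rV[R]_3) : Prop :=
  0 < cgk_mobility n /\ config_dim0_at_0 w q.

End Screws.

(* Main.v *)
Require Import Defs.
From HB Require Import structures.
From mathcomp Require Import all_boot all_order all_algebra.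
From mathcomp Require Import all_classical all_reals all_analysis.
From mathcomp Require Import ring lra zify.
Import Order.TTheory GRing.Theory Num.Theory.
Import numFieldNormedType.Exports.
Set Implicit Arguments. Unset Strict Implicit. Unset Printing Implicit Defensive.
Local Open Scope ring_scope.

Section Expm.
Variable R : realType.

Definition ss (k : nat) : R := (odd k)%:R * (-1) ^+ k.-1./2.
Definition cs (k : nat) : R := (~~ odd k)%:R * (-1) ^+ k./2.

Lemma powX (X : 'M[R]_4) : X ^+ 3 = - X ->
  forall k, X ^+ k.+1 = ss k.+1 *: X - cs k.+1 *: X ^+ 2.
Proof.
move=> X3; elim=> [|k IH].
  by rewrite /ss /cs /= expr0 mul1r mul0r scale1r scale0r subr0 expr1.
rewrite exprSr IH mulrBl -!scalerAl -expr2 -exprSr X3 scalerN opprK.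
rewrite addrC /ss /cs /= !negbK; congr (_ + _).
by case: (odd k) => /=; rewrite ?mul0r ?scale0r ?oppr0 // !mul1r (exprS _ k./2) mulN1r scaleNr opprK.
Qed.

Lemma termX (X : 'M[R]_4) (th : R) : X ^+ 3 = - X -> forall k,
  (k`!%:R)^-1 *: (th *: X) ^+ k =
  sin_coeff th k *: X - cos_coeff th k *: X ^+ 2 + (k == 0)%:R *: (1 + X ^+ 2).
Proof.
move=> X3 [|k].
  have -> : sin_coeff th 0 = 0 by rewrite /sin_coeff /= !mul0r.
  have -> : cos_coeff th 0 = 1.
   by rewrite /cos_coeff /= mul1r (expr0 th) expr0z !mul1r invr1.
  by rewrite !expr0 /= invr1 !scale1r scale0r sub0r addrCA addNr addr0.
rewrite (exprZn th X) (@powX X X3 k) /sin_coeff /cos_coeff /= scale0r addr0.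
rewrite scalerBr !scalerA /ss /cs /=.
rewrite scalerBr !scalerA; congr (_ *: _ - _ *: _).
  by ring.
change ((-1) ^ uphalf k) with ((-1 : R) ^+ uphalf k); by ring.
Qed.

Lemma expm_cyc (X : 'M[R]_4) (th : R) : X ^+ 3 = - X ->
  expm (th *: X) = 1 + sin th *: X + (1 - cos th) *: X ^+ 2.
Proof.
move=> X3; rewrite /expm.
have E : forall N, \sum_(k < N.+1) (k`!%:R)^-1 *: (th *: X) ^+ k =
   series (sin_coeff th) N.+1 *: X - series (cos_coeff th) N.+1 *: X ^+ 2 + (1 + X ^+ 2).
  move=> N; under eq_bigr do rewrite termX //.
  rewrite !big_split /= -!scaler_suml /series /= !big_mkord.
  have -> : \sum_(i < N.+1) ((i:nat) == 0)%:R = 1 :> R.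
    by rewrite big_ord_recl big1 ?addr0 // => i _.
  by rewrite sumrN -scaler_suml scale1r.
apply: cvg_lim => //.
rewrite -cvg_shiftS /=.
under eq_fun do rewrite E.
have -> : 1 + sin th *: X + (1 - cos th) *: X ^+ 2 =
   sin th *: X - cos th *: X ^+ 2 + (1 + X ^+ 2).
  by rewrite scalerBl scale1r [RHS]addrC -!addrA; congr (1 + _); rewrite addrCA.
apply: cvgD; last exact: cvg_cst.
apply: cvgB; apply: cvgZl.
  rewrite cvg_shiftS sin.unlock; exact: is_cvg_series_sin_coeff.
rewrite cvg_shiftS cos.unlock; exact: is_cvg_series_cos_coeff.
Qed.
End Expm.

Section Coords.
Variable R : realType.

Lemma sum3 (F : 'I_3 -> R) : \sum_(i < 3) F i = F (inord 0) + F (inord 1) + F (inord 2).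
Proof.
rewrite !big_ord_recl big_ord0 addr0 !addrA /=.
by congr (F _ + F _ + F _); apply/val_inj; rewrite /= inordK.
Qed.

Lemma sum4 (F : 'I_4 -> R) :
  \sum_(i < 4) F i = F (inord 0) + F (inord 1) + F (inord 2) + F (inord 3).
Proof.
rewrite !big_ord_recl big_ord0 addr0 !addrA /=.
by congr (F _ + F _ + F _ + F _); apply/val_inj; rewrite /= inordK.
Qed.

Lemma vinord n m : (m < n.+1)%N -> \val (inord m : 'I_n.+1) = m.
Proof. exact: inordK. Qed.

Definition vc (v : 'cV[R]_4) (k : nat) : R := v (inord k) 0.

Lemma M4P (A B : 'M[R]_4) :
  (forall i j, (i < 4)%N -> (j < 4)%N -> A (inord i) (inord j) = B (inord i) (inord j)) -> A = B.
Proof.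
by move=> H; apply/matrixP => i j; rewrite -(inord_val i) -(inord_val j); apply: H.
Qed.

Lemma cV4P (u v : 'cV[R]_4) : (forall k, (k < 4)%N -> vc u k = vc v k) -> u = v.
Proof.
by move=> H; apply/matrixP => i j; rewrite (ord1 j) -(inord_val i); apply: H.
Qed.

Lemma mulmx4 (A B : 'M[R]_4) i j : (A *m B) i j =
  A i (inord 0) * B (inord 0) j + A i (inord 1) * B (inord 1) j +
  A i (inord 2) * B (inord 2) j + A i (inord 3) * B (inord 3) j.
Proof. by rewrite mxE sum4. Qed.

Lemma mulmxv4 (A : 'M[R]_4) (v : 'cV[R]_4) k : vc (A *m v) k =
  A (inord k) (inord 0) * vc v 0 + A (inord k) (inord 1) * vc v 1 +
  A (inord k) (inord 2) * vc v 2 + A (inord k) (inord 3) * vc v 3.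
Proof. by rewrite /vc mxE sum4. Qed.

Definition tw (w q : 'rV[R]_3) (i j : nat) : R :=
  match i, j with
  | 0, 1 => - vcoord w 2 | 0, 2 => vcoord w 1
  | 1, 0 => vcoord w 2   | 1, 2 => - vcoord w 0
  | 2, 0 => - vcoord w 1 | 2, 1 => vcoord w 0
  | 0, 3 => vcoord q 1 * vcoord w 2 - vcoord q 2 * vcoord w 1
  | 1, 3 => vcoord q 2 * vcoord w 0 - vcoord q 0 * vcoord w 2
  | 2, 3 => vcoord q 0 * vcoord w 1 - vcoord q 1 * vcoord w 0
  | _, _ => 0
  end.

Lemma crossE (u v : 'rV[R]_3) k : (k < 3)%N -> vcoord (cross u v) k =
  match k with
  | 0 => vcoord u 1 * vcoord v 2 - vcoord u 2 * vcoord v 1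
  | 1 => vcoord u 2 * vcoord v 0 - vcoord u 0 * vcoord v 2
  | _ => vcoord u 0 * vcoord v 1 - vcoord u 1 * vcoord v 0
  end.
Proof.
move=> Hk; rewrite /vcoord /cross !mxE sum3 !mxE !vinord //.
by case: k Hk => [|[|[|k]]] // _ /=; rewrite /vcoord; ring.
Qed.

Lemma twistE (w q : 'rV[R]_3) i j : (i < 4)%N -> (j < 4)%N ->
  twist w q (inord i) (inord j) = tw w q i j.
Proof.
move=> Hi Hj; rewrite /twist mxE !inordK //.
case: i Hi => [|[|[|[|i]]]] // _; case: j Hj => [|[|[|[|j]]]] // _ /=;
  rewrite ?mxE ?vinord //=;
  rewrite sum3 !mxE !vinord //= /vcoord; ring.
Qed.

Lemma dotE (u v : 'rV[R]_3) : dot u v =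
  vcoord u 0 * vcoord v 0 + vcoord u 1 * vcoord v 1 + vcoord u 2 * vcoord v 2.
Proof. by rewrite /dot sum3. Qed.

Lemma twist3 (w q : 'rV[R]_3) : twist w q ^+ 3 = - (dot w w) *: twist w q.
Proof.
apply: M4P => i j Hi Hj.
rewrite [RHS]mxE exprS expr2 -!mulmxE !mulmx4 !twistE // dotE.
case: i Hi => [|[|[|[|i]]]] // _; case: j Hj => [|[|[|[|j]]]] // _ /=; ring.
Qed.


Lemma vcD (u v : 'cV[R]_4) k : vc (u + v) k = vc u k + vc v k.
Proof. by rewrite /vc mxE. Qed.
Lemma vcB (u v : 'cV[R]_4) k : vc (u - v) k = vc u k - vc v k.
Proof. by rewrite /vc !mxE. Qed.
Lemma vcZ (c : R) (u : 'cV[R]_4) k : vc (c *: u) k = c * vc u k.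
Proof. by rewrite /vc mxE. Qed.
Lemma vc0 k : vc 0 k = 0.
Proof. by rewrite /vc mxE. Qed.

Definition nrm (v : 'cV[R]_4) : R := vc v 0 ^+ 2 + vc v 1 ^+ 2 + vc v 2 ^+ 2.

Definition rigid (M : 'M[R]_4) : Prop :=
  (forall v, vc (M *m v) 3 = vc v 3) /\ (forall v, vc v 3 = 0 -> nrm (M *m v) = nrm v).

Lemma rigid1 : rigid 1.
Proof. by split=> v; rewrite mul1mx. Qed.

Lemma rigidM A B : rigid A -> rigid B -> rigid (A * B).
Proof.
move=> [A1 A2] [B1 B2]; split=> v; rewrite -mulmxE -mulmxA.
  by rewrite A1 B1.
by move=> h; rewrite A2 ?B2 // B1.
Qed.

Lemma Eact (X : 'M[R]_4) (s c : R) (v : 'cV[R]_4) :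
  (1 + s *: X + c *: X ^+ 2) *m v = v + s *: (X *m v) + c *: (X *m (X *m v)).
Proof.
by rewrite !mulmxDl mul1mx -!scalemxAl expr2 -mulmxE mulmxA.
Qed.

Lemma expm_twist (w q : 'rV[R]_3) th : dot w w = 1 ->
  expm (th *: twist w q) = 1 + sin th *: twist w q + (1 - cos th) *: twist w q ^+ 2.
Proof.
move=> hw; apply: expm_cyc.
by rewrite twist3 hw scaleN1r.
Qed.

Lemma rigidE (w q : 'rV[R]_3) th : dot w w = 1 -> rigid (expm (th *: twist w q)).
Proof.
move=> hw; rewrite expm_twist //; split=> v.
  by rewrite Eact !vcD !vcZ !mulmxv4 !twistE //=; ring.
move=> h3; rewrite /nrm Eact !vcD !vcZ !mulmxv4 !twistE //= h3.
move: hw; rewrite dotE => hw.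
have hsc := cos2Dsin2 th.
apply/eqP; rewrite -subr_eq0; apply/eqP.
set w0 := vcoord w 0; set w1 := vcoord w 1; set w2 := vcoord w 2.
set u0 := vc v 0; set u1 := vc v 1; set u2 := vc v 2.
set s := sin th; set co := cos th.
transitivity (((w1 * u2 - w2 * u1) ^+ 2 + (w2 * u0 - w0 * u2) ^+ 2 + (w0 * u1 - w1 * u0) ^+ 2)
   * (s ^+ 2 + (1 - co) ^+ 2 * (w0 * w0 + w1 * w1 + w2 * w2) - 2 * (1 - co))).
  ring.
rewrite hw.
have -> : s ^+ 2 + (1 - co) ^+ 2 * 1 - 2 * (1 - co) = co ^+ 2 + s ^+ 2 - 1 by ring.
by rewrite hsc subrr mulr0.
Qed.


Lemma sin0_small (x : R) : sin x = 0 -> `|x| < pi -> x = 0.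
Proof.
move=> hs hx; case: (ltgtP x 0) => // hx0.
  have : 0 < sin (- x) by apply: sin_gt0_pi; rewrite oppr_gt0 hx0 /= -normrN ger0_norm // in hx *; rewrite ?oppr_ge0 ltW.
  by rewrite sinN hs oppr0 ltxx.
have : 0 < sin x by apply: sin_gt0_pi; rewrite hx0 /= -(gtr0_norm hx0).
by rewrite hs ltxx.
Qed.

Lemma mono0 (S : nat -> R) m : (forall j, (j < m)%N -> S j.+1 <= S j) ->
  S 0%N = 0 -> S m = 0 -> forall j, (j <= m)%N -> S j = 0.
Proof.
move=> hS h0 hm.
have up : forall j, (j <= m)%N -> S j <= 0.
  elim=> [|j IH] hj; first by rewrite h0.
  by apply: le_trans (hS j hj) (IH (ltnW hj)).
have lo : forall k j, (j + k = m)%N -> 0 <= S j.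
  elim=> [|k IH] j hj; first by move: hj; rewrite addn0 => ->; rewrite hm.
  apply: le_trans (IH j.+1 _) (hS j _); lia.
move=> j hj; apply/eqP; rewrite eq_le up //=; apply: (lo (m - j)%N); lia.
Qed.

Lemma sq3_0 (x y z : R) : x ^+ 2 + y ^+ 2 + z ^+ 2 = 0 -> [/\ x = 0, y = 0 & z = 0].
Proof.
move=> h.
have hx : x ^+ 2 = 0 by apply/eqP; rewrite eq_le sqr_ge0 andbT -h -addrA lerDl addr_ge0 // sqr_ge0.
have hy : y ^+ 2 = 0 by apply/eqP; rewrite eq_le sqr_ge0 andbT -h addrAC lerDr addr_ge0 // sqr_ge0.
have hz : z ^+ 2 = 0 by apply/eqP; rewrite eq_le sqr_ge0 andbT -h lerDr addr_ge0 // sqr_ge0.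
by split; apply/eqP; rewrite -sqrf_eq0; apply/eqP.
Qed.

Lemma rV3P (u v : 'rV[R]_3) : (forall k, (k < 3)%N -> vcoord u k = vcoord v k) -> u = v.
Proof.
by move=> H; apply/matrixP => i j; rewrite (ord1 i) -(inord_val j); apply: H.
Qed.

Lemma vcoord0 k : vcoord (0 : 'rV[R]_3) k = 0.
Proof. by rewrite /vcoord mxE. Qed.

Lemma vc_col (f : nat -> R) k : (k < 4)%N -> vc (\col_(i < 4) f i) k = f k.
Proof. by move=> hk; rewrite /vc mxE inordK. Qed.

End Coords.


Unset Implicit Arguments.
Theorem mainTheorem2 (R : realType) (n : nat) (w q : 'I_n -> 'rV[R]_3)
    (a d : 'rV[R]_3) (t : 'I_n -> R) :
  (7 <= n)%N ->
  (forall i, dot (w i) (w i) = 1) ->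
  d != 0 ->
  (forall i, cross (w i) d != 0) ->
  (forall i, exists s : R, a + t i *: d = q i + s *: w i) ->
  (forall i j : 'I_n, (i < j)%N -> t i < t j) ->
  hypo_paradoxical w q.
Proof.
case: n w q t => [|n] w q t; first by [].
move=> hn hw hd hwd hax hmon.
split; first by rewrite /cgk_mobility; lia.
exists pi; first exact: pi_gt0.
move=> th hloop hsmall.
pose F := fun j : nat => expm (th (inord j) *: twist (w (inord j)) (q (inord j))).
pose G := fun k : nat => \prod_(j < k) F j.
pose fD := fun k : nat => if (k < 3)%N then vcoord d k else 0.
pose fA := fun k : nat => if (k < 3)%N then vcoord a k else 1.
pose D : 'cV[R]_4 := \col_(i < 4) fD i.
pose A : 'cV[R]_4 := \col_(i < 4) fA i.
pose tt := fun j : nat => t (inord j).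
pose pt := fun j : nat => A + tt j *: D.
have vD : forall k, (k < 4)%N -> vc D k = fD k by move=> k hk; rewrite vc_col.
have vA : forall k, (k < 4)%N -> vc A k = fA k by move=> k hk; rewrite vc_col.
have vpt : forall j k, (k < 4)%N -> vc (pt j) k = fA k + tt j * fD k.
  by move=> j k hk; rewrite vcD vcZ vD // vA.
have G0 : G 0%N = 1 by rewrite /G big_ord0.
have GS : forall k, G k.+1 = G k * F k by move=> k; rewrite /G big_ord_recr.
have Gn : G n.+1 = 1.
  have hl : \prod_(i < n.+1) expm (th i *: twist (w i) (q i)) = 1 := hloop.
  rewrite -hl /G; apply: eq_bigr => i _; by rewrite /F inord_val.
have rF : forall j, rigid (F j) by move=> j; apply: rigidE.
have rG : forall k, rigid (G k).
  elim=> [|k IH]; first by rewrite G0; exact: rigid1.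
  by rewrite GS; apply: rigidM.
have tlt : forall j, (j < n)%N -> tt j < tt j.+1.
  by move=> j hj; apply: hmon; rewrite !inordK; lia.
have hax' : forall j, exists s' : R, forall k, (k < 3)%N -> vcoord a k =
    vcoord (q (inord j)) k + s' * vcoord (w (inord j)) k - tt j * vcoord d k.
  move=> j; have [s' hs'] := hax (inord j); exists s' => k hk.
  have := congr1 (fun M : 'rV[R]_3 => M ord0 (inord k)) hs'.
  rewrite /= !mxE /vcoord /tt => <-; ring.
have Fix : forall j, (j <= n)%N -> F j *m pt j = pt j.
  move=> j hj; have [s' ha] := hax' j.
  have X0 : twist (w (inord j)) (q (inord j)) *m pt j = 0.
    apply: cV4P => k hk; rewrite vc0 mulmxv4 !twistE // !vpt //.
    rewrite /fA /fD /= (ha 0%N) // (ha 1%N) // (ha 2%N) //.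
    by case: k hk => [|[|[|[|k]]]] // _ /=; ring.
  by rewrite /F expm_twist ?hw // Eact X0 mulmx0 !scaler0 !addr0.
have QS : forall j, (j <= n)%N -> G j.+1 *m pt j = G j *m pt j.
  by move=> j hj; rewrite GS -mulmxE -mulmxA Fix.
have ptS : forall j, pt j.+1 - pt j = (tt j.+1 - tt j) *: D.
  by move=> j; rewrite /pt /= opprD addrACA subrr add0r scalerBl.
have ND : 0 < nrm D.
  have hge : 0 <= nrm D by rewrite /nrm !addr_ge0 // sqr_ge0.
  rewrite lt_neqAle hge andbT eq_sym; apply/negP => /eqP.
  rewrite /nrm => /sq3_0 [e0 e1 e2]; move/eqP: hd; apply; apply: rV3P => k hk; rewrite vcoord0.
  case: k hk => [|[|[|k]]] // _.
  - by move: e0; rewrite vD.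
  - by move: e1; rewrite vD.
  - by move: e2; rewrite vD.
pose dD := fun v : 'cV[R]_4 => vc v 0 * vc D 0 + vc v 1 * vc D 1 + vc v 2 * vc D 2.
pose z := fun j => G j.+1 *m pt j.+1 - G j.+1 *m pt j.
have zE : forall j, z j = G j.+1 *m ((tt j.+1 - tt j) *: D).
  by move=> j; rewrite /z -mulmxBr ptS.
have vD3 : vc D 3 = 0 by rewrite vD.
have vcz3 : forall j, vc (z j) 3 = 0.
  by move=> j; rewrite zE (rG _).1 vcZ vD3 mulr0.
have nz : forall j, nrm (z j) = (tt j.+1 - tt j) ^+ 2 * nrm D.
  move=> j; rewrite zE (rG _).2; last by rewrite vcZ vD3 mulr0.
  by rewrite /nrm !vcZ; ring.
have idz : forall j, nrm (z j - (tt j.+1 - tt j) *: D) =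
    nrm (z j) - 2 * (tt j.+1 - tt j) * dD (z j) + (tt j.+1 - tt j) ^+ 2 * nrm D.
  by move=> j; rewrite /nrm /dD !vcB !vcZ; ring.
have ineq : forall j, (j < n)%N -> dD (z j) <= (tt j.+1 - tt j) * nrm D.
  move=> j hj; have h := tlt j hj.
  have h0 : 0 <= nrm (z j - (tt j.+1 - tt j) *: D) by rewrite /nrm !addr_ge0 // sqr_ge0.
  rewrite idz nz in h0; nra.
pose S := fun j => dD (G j *m pt j - pt j).
have Sstep : forall j, (j <= n)%N -> S j.+1 - S j = dD (z j) - (tt j.+1 - tt j) * nrm D.
  move=> j hj; rewrite /S /= -(QS j hj) /dD /z /nrm /= !vcB !vpt // !vD // /fD /fA /=; ring.
have S0 : S 0%N = 0 by rewrite /S G0 mul1mx subrr /dD !vc0; ring.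
have Sn : S n = 0 by rewrite /S -QS // Gn mul1mx subrr /dD !vc0; ring.
have Sz := @mono0 R S n (fun j hj => ltac:(have := Sstep j (ltnW hj); have := ineq j hj; lra)) S0 Sn.
have zeq : forall j, (j < n)%N -> z j = (tt j.+1 - tt j) *: D.
  move=> j hj.
  have e : dD (z j) = (tt j.+1 - tt j) * nrm D.
    have := Sstep j (ltnW hj); rewrite Sz // Sz ?(ltnW hj) //; lra.
  have h0 : nrm (z j - (tt j.+1 - tt j) *: D) = 0 by rewrite idz nz e; ring.
  move: h0; rewrite /nrm => /sq3_0 [e0 e1 e2].
  apply: cV4P => k hk; case: k hk => [|[|[|[|k]]]] // _.
  - by apply/eqP; rewrite -subr_eq0 -vcB e0.
  - by apply/eqP; rewrite -subr_eq0 -vcB e1.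
  - by apply/eqP; rewrite -subr_eq0 -vcB e2.
  - by rewrite vcz3 vcZ vD3 mulr0.
have Qeq : forall j, (j <= n)%N -> G j *m pt j = pt j.
  elim=> [|j IH] hj; first by rewrite G0 mul1mx.
  have := zeq j hj; rewrite /z QS ?(ltnW hj) // IH ?(ltnW hj) // -ptS.
  by move/(congr1 (fun v => v + pt j)); rewrite !subrK.
have fixDA : forall k, (k <= n.+1)%N -> G k *m D = D /\ G k *m A = A.
  case=> [|k] hk; first by rewrite G0 !mul1mx.
  case: (ltnP k n) => hkn.
    have e1 : G k.+1 *m ((tt k.+1 - tt k) *: D) = (tt k.+1 - tt k) *: D.
      by rewrite -ptS mulmxBr Qeq // QS ?(ltnW hkn) // Qeq // ltnW.
    have GD : G k.+1 *m D = D.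
      move: e1; rewrite -scalemxAr; apply: scalerI.
      by rewrite subr_eq0 gt_eqF // tlt.
    split=> //.
    have -> : A = pt k.+1 - tt k.+1 *: D by rewrite /pt addrK.
    by rewrite mulmxBr Qeq // -scalemxAr GD.
  have -> : k = n by apply/eqP; rewrite eqn_leq hkn -ltnS hk.
  by rewrite Gn !mul1mx.
have fixx : forall k c, (k <= n.+1)%N -> G k *m (A + c *: D) = A + c *: D.
  by move=> k c hk; have [h1 h2] := fixDA k hk; rewrite mulmxDr -scalemxAr h1 h2.
have thz : forall j, (j <= n)%N -> th (inord j) = 0.
  move=> j hj.
  pose x := A + (tt j + 1) *: D.
  have hv : G j *m (F j *m x - x) = 0.
    by rewrite mulmxBr mulmxA mulmxE -GS !fixx ?subrr // ltnW.
  pose v := F j *m x - x.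
  have v3 : vc v 3 = 0 by rewrite vcB (rF j).1 subrr.
  have nv : nrm v = 0.
    by rewrite -((rG j).2 v v3) hv /nrm !vc0; ring.
  move: nv; rewrite /nrm => /sq3_0 [e0 e1 e2].
  have vE : v = sin (th (inord j)) *: (twist (w (inord j)) (q (inord j)) *m x) +
     (1 - cos (th (inord j))) *: (twist (w (inord j)) (q (inord j)) *m
        (twist (w (inord j)) (q (inord j)) *m x)).
    by rewrite /v /F expm_twist // Eact -[x + _ + _]addrA [LHS]addrC addKr.
  have [s' ha] := hax' j.
  pose w0 := vcoord (w (inord j)) 0; pose w1 := vcoord (w (inord j)) 1;
  pose w2 := vcoord (w (inord j)) 2.
  pose d0 := vcoord d 0; pose d1 := vcoord d 1; pose d2 := vcoord d 2.
  pose K := (w1 * d2 - w2 * d1) ^+ 2 + (w2 * d0 - w0 * d2) ^+ 2 + (w0 * d1 - w1 * d0) ^+ 2.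
  have key : sin (th (inord j)) * K =
    vc (twist (w (inord j)) (q (inord j)) *m x) 0 * vc v 0 +
    vc (twist (w (inord j)) (q (inord j)) *m x) 1 * vc v 1 +
    vc (twist (w (inord j)) (q (inord j)) *m x) 2 * vc v 2.
    rewrite vE !vcD !vcZ !mulmxv4 !twistE //= /x !vcD !vcZ !vA // !vD //.
    rewrite /fA /fD /= (ha 0%N) // (ha 1%N) // (ha 2%N) //.
    rewrite /K /w0 /w1 /w2 /d0 /d1 /d2; ring.
  rewrite e0 e1 e2 !mulr0 !addr0 in key.
  have K0 : K != 0.
    apply/eqP; rewrite /K => /sq3_0 [c0 c1 c2].
    move/eqP: (hwd (inord j)); apply; apply: rV3P => k hk; rewrite vcoord0 crossE //.
    by case: k hk => [|[|[|k]]] // _.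
  have s0 : sin (th (inord j)) = 0.
    by move/eqP: key; rewrite mulf_eq0 (negbTE K0) orbF => /eqP.
  exact: sin0_small s0 (hsmall _).
move=> i; rewrite -(inord_val i); apply: thz; rewrite -ltnS; exact: ltn_ord i.
Qed.
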